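(* Let $p\ge1$, $f\in\mathcal A_0$, and let $\gamma_f$ be a solution of Problem $S_p$ for $f$. Then $\overline\delta J_p(f,\gamma_f)=1$.
   Context: For a convex $u$, $u^*(y)=\sup_x\{\langle x,y\rangle-u(x)\}$. $\mathcal L$: proper convex $u:\mathbb R^n\to\mathbb R\cup\{+\infty\}$ with $u(x)\to+\infty$ as $|x|\to\infty$; $\mathcal L_0=\{u\in\mathcal L:u\ge0,\ u^{**}=u,\ u(0)=0\}$; $\mathcal A_0=\{e^{-u}:u\in\mathcal L_0\}$ (integrable, support with nonempty interior). For $f=e^{-u}$: $h_f=u^*$; $J(f)=\int f\,dx$; $J(f^\diamond)=\int(nf+f\log f)\,dx$; $\mu_p(f,\cdot)$ defined by $\int g\,d\mu_p(f,\cdot)=\int_{\mathrm{dom}(u)}g(\nabla u(x))h_f(\nabla u(x))^{1-p}f(x)\,dx$; $\delta J_p(f,g)=\frac1p\int h_g^p\,d\mu_p(f,\cdot)$ and $\overline\delta J_p(f,g)=(p\,\delta J_p(f,g)/J(f^\diamond))^{1/p}$. Gaussians: $\gamma_\phi(x)=e^{-\|\phi x\|^2/2}$, $\phi\in GL(n)$; $c_n=(2\pi)^{n/2}$. Problem $S_p$: find a Gaussian $\gamma_\phi$ maximizing $J(\gamma_\phi)/c_n$ subject to $\overline\delta J_p(f,\gamma_\phi)\le1$. *)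

(* Defs.v *)
From HB Require Import structures.
From mathcomp Require Import all_boot all_order all_algebra.
From mathcomp Require Import all_classical all_reals all_analysis.
Set Implicit Arguments. Unset Strict Implicit. Unset Printing Implicit Defensive.
Import Order.TTheory GRing.Theory Num.Theory.
Import numFieldNormedType.Exports.
Local Open Scope classical_set_scope.
Local Open Scope ring_scope.

Section Defs.
Variable R : realType.

Definition inner (n : nat) (x y : 'rV[R]_n) : R := \sum_(i < n) x 0 i * y 0 i.
Definition enorm (n : nat) (x : 'rV[R]_n) : R := Num.sqrt (inner x x).

(* Lebesgue integral on R^n of a nonnegative extended-real function,
   computed as an iterated one-dimensional Lebesgue integral (Tonelli). *)
Fixpoint lint (n : nat) : ('rV[R]_n -> \bar R) -> \bar R :=
  match n with
  | 0 => fun F => F 0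
  | m.+1 => fun F => (\int[@lebesgue_measure R]_(t in [set: R])
        lint (fun y : 'rV[R]_m => F (row_mx (const_mx t : 'rV[R]_1) y)))%E
  end.

Definition rint (n : nat) (F : 'rV[R]_n -> R) : \bar R :=
  (lint (fun x => (Num.max (F x) 0)%:E) - lint (fun x => (Num.max (- F x) 0)%:E))%E.

Definition dom (n : nat) (u : 'rV[R]_n -> \bar R) : set 'rV[R]_n :=
  [set x | u x \is a fin_num].

(* Convexity in R ∪ {+oo} (values -oo are excluded by properness). *)
Definition econvex (n : nat) (u : 'rV[R]_n -> \bar R) : Prop :=
  forall (x y : 'rV[R]_n) (t : R), 0 <= t <= 1 ->
    (u (t *: x + (1 - t) *: y)%R <= t%:E * u x + (1 - t)%R%:E * u y)%E.

Definition proper (n : nat) (u : 'rV[R]_n -> \bar R) : Prop :=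
  (forall x, u x != -oo%E) /\ exists x, u x \is a fin_num.

Definition coercive (n : nat) (u : 'rV[R]_n -> \bar R) : Prop :=
  forall M : R, exists r : R, forall x, r < enorm x -> (M%:E < u x)%E.

Definition classL (n : nat) (u : 'rV[R]_n -> \bar R) : Prop :=
  proper u /\ econvex u /\ coercive u.

Definition legendre (n : nat) (u : 'rV[R]_n -> \bar R) : 'rV[R]_n -> \bar R :=
  fun y => ereal_sup [set ((inner x y)%:E - u x)%E | x in [set: 'rV[R]_n]].

Definition classL0 (n : nat) (u : 'rV[R]_n -> \bar R) : Prop :=
  classL u /\ (forall x, (0 <= u x)%E) /\ legendre (legendre u) = u /\ u 0 = 0%E.

Definition expm (n : nat) (u : 'rV[R]_n -> \bar R) : 'rV[R]_n -> R :=
  fun x => match u x with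
           | r%:E => expR (- r)
           | +oo%E => 0
           | -oo%E => 0 (* never happens for proper u *)
           end.

Definition Jf (n : nat) (f : 'rV[R]_n -> R) : \bar R := rint f.

(* J(f^diamond) = int (n f + f log f) dx *)
Definition Jdiamond (n : nat) (f : 'rV[R]_n -> R) : \bar R :=
  rint (fun x => n%:R * f x + f x * ln (f x)).

Definition classA0 (n : nat) (u : 'rV[R]_n -> \bar R) : Prop :=
  classL0 u /\ Jf (expm u) \is a fin_num /\
  (interior [set x | expm u x != 0] !=set0).

Definition graddom (n : nat) (u : 'rV[R]_n -> \bar R) : set 'rV[R]_n :=
  [set x | interior (dom u) x /\ differentiable (fun z => fine (u z)) x].
Definition grad (n : nat) (u : 'rV[R]_n -> \bar R) (x : 'rV[R]_n) : 'rV[R]_n :=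
  \row_(i < n) ('d (fun z => fine (u z)) x : 'rV[R]_n -> R) (delta_mx 0 i).

Definition epow (a : \bar R) (s : R) : \bar R :=
  match a with
  | a'%:E => if a' == 0 then (if s < 0 then +oo%E else if s == 0 then 1%E else 0%E)
             else (powR a' s)%:E
  | +oo%E => if s < 0 then 0%E else if s == 0 then 1%E else +oo%E
  | -oo%E => 0%E
  end.

(* delta J_p(f,g) = 1/p int h_g^p d mu_p(f,.), where f = e^{-u}, h_f = u^*,
   h_g = hg and
   int G d mu_p(f,.) = int_{dom u} G(grad u x) h_f(grad u x)^{1-p} f(x) dx. *)
Definition deltaJ (n : nat) (p : R) (u : 'rV[R]_n -> \bar R)
    (hg : 'rV[R]_n -> \bar R) : \bar R :=
  ((p^-1)%:E * lint (fun x =>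
     if `[< graddom u x >] then
       epow (hg (grad u x)) p * epow (legendre u (grad u x)) (1 - p)%R
         * (expm u x)%:E
     else 0))%E.

Definition odeltaJ (n : nat) (p : R) (u : 'rV[R]_n -> \bar R)
    (hg : 'rV[R]_n -> \bar R) : \bar R :=
  poweR (p%:E * deltaJ p u hg * ((fine (Jdiamond (expm u)))^-1)%:E)%E (p^-1)%R.

(* Gaussians gamma_phi(x) = exp(-|phi x|^2/2) = e^{-u_phi}, u_phi(x) = |phi x|^2/2;
   phi x is the vector with coordinates sum_j phi_ij x_j. *)
Definition ugauss (n : nat) (phi : 'M[R]_n) : 'rV[R]_n -> \bar R :=
  fun x => ((enorm (x *m phi^T)) ^+ 2 / 2)%:E.
Definition gauss (n : nat) (phi : 'M[R]_n) : 'rV[R]_n -> R := expm (ugauss phi).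
Definition hgauss (n : nat) (phi : 'M[R]_n) : 'rV[R]_n -> \bar R :=
  legendre (ugauss phi).

Definition c_n (n : nat) : R := powR (2 * pi) (n%:R / 2).

Definition solves_Sp (n : nat) (p : R) (u : 'rV[R]_n -> \bar R) (phi0 : 'M[R]_n) : Prop :=
  phi0 \in unitmx /\ (odeltaJ p u (hgauss phi0) <= 1)%E /\
  forall phi : 'M[R]_n, phi \in unitmx -> (odeltaJ p u (hgauss phi) <= 1)%E ->
    (Jf (gauss phi) * ((c_n n)^-1)%:E <= Jf (gauss phi0) * ((c_n n)^-1)%:E)%E.

End Defs.

(* Main.v *)
Require Import Defs.
From HB Require Import structures.
From mathcomp Require Import all_boot all_order all_algebra.
From mathcomp Require Import all_classical all_reals all_analysis.
From mathcomp Require Import ring lra.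
Import Order.TTheory GRing.Theory Num.Theory.
Set Implicit Arguments. Unset Strict Implicit. Unset Printing Implicit Defensive.
Local Open Scope ring_scope.
Section IntLemmas.
Context {R : realType}.
Local Open Scope ereal_scope.
Local Notation mu := (@lebesgue_measure R).

Lemma int_le (f g : R -> \bar R) : (forall x, 0 <= f x) -> (forall x, f x <= g x) ->
  \int[mu]_x f x <= \int[mu]_x g x.
Proof.
move=> f0 fg.
have g0 : forall x, 0 <= g x by move=> x; exact: le_trans (f0 x) (fg x).
rewrite (ge0_integralTE mu f0) (ge0_integralTE mu g0).
apply: ereal_sup_le => _ [h /= hf <-]; exists h => //= x; exact: le_trans (hf x) (fg x).
Qed.

Lemma int_scale (k : R) (f : R -> \bar R) : (0 < k)%R -> (forall x, 0 <= f x) ->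
  \int[mu]_x (k%:E * f x) = k%:E * \int[mu]_x f x.
Proof.
move=> k0 f0.
have kf0 : forall x, 0 <= k%:E * f x by move=> x; rewrite mule_ge0 // lee_fin ltW.
rewrite (ge0_integralTE mu f0) (ge0_integralTE mu kf0) -ereal_sup_pZl //.
congr ereal_sup; apply/seteqP; split.
- move=> _ [h /= hf <-].
  have ki0 : (0 <= k^-1)%R by rewrite invr_ge0 ltW.
  eexists.
    exists (scale_nnsfun h ki0); last reflexivity.
    move=> x /=.
    have := hf x; rewrite -(lee_pmul2l (x:=k^-1%:E)) ?lte_fin ?invr_gt0 //.
    by rewrite -EFinM [X in _ <= X]muleA -EFinM mulVf ?gt_eqF // mul1e.
  by rewrite sintegralrM muleA -EFinM mulfV ?gt_eqF // mul1e.
- move=> _ [_ [h /= hf <-] <-].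
  exists (scale_nnsfun h (ltW k0)).
    move=> x /=; rewrite EFinM lee_pmul2l ?lte_fin //; exact: hf.
  by rewrite sintegralrM.
Qed.

Lemma sup_add_le (A B : set (\bar R)) (M : \bar R) :
  (forall a, A a -> 0 <= a) -> (forall b, B b -> 0 <= b) ->
  (A !=set0)%classic -> (B !=set0)%classic ->
  (forall a b, A a -> B b -> a + b <= M) -> ereal_sup A + ereal_sup B <= M.
Proof.
move=> A0 B0 [a0 Aa0] [b0 Bb0] H.
have step : forall a, A a -> a + ereal_sup B <= M.
  move=> a Aa; have a0' := A0 a Aa.
  case: a a0' Aa => [r| |] // r0 Aa.
  - rewrite -leeBrDl //; apply: ge_ereal_sup => b Bb; rewrite leeBrDl //; exact: H.
  - have := H _ _ Aa Bb0; rewrite addye; last by have := B0 _ Bb0; case: b0 {Bb0}.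
    by rewrite leye_eq => /eqP ->; rewrite leey.
have sB0 : 0 <= ereal_sup B by apply: le_trans (B0 _ Bb0) _; exact: ereal_sup_ubound.
move: sB0 step; case: (ereal_sup B) => [r| |] // r0 step.
- rewrite -leeBrDr //; apply: ge_ereal_sup => a Aa; rewrite leeBrDr //; exact: step.
- have := step _ Aa0; rewrite addey; last by have := A0 _ Aa0; case: a0 {Aa0}.
  by rewrite leye_eq => /eqP ->; rewrite leey.
Qed.

Lemma int_superadd (f g : R -> \bar R) : (forall x, 0 <= f x) -> (forall x, 0 <= g x) ->
  \int[mu]_x f x + \int[mu]_x g x <= \int[mu]_x (f x + g x).
Proof.
move=> f0 g0.
have fg0 : forall x, 0 <= f x + g x by move=> x; rewrite adde_ge0.
rewrite (ge0_integralTE mu f0) (ge0_integralTE mu g0) (ge0_integralTE mu fg0).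
apply: sup_add_le.
- by move=> _ [h _ <-]; exact: sintegral_ge0.
- by move=> _ [h _ <-]; exact: sintegral_ge0.
- by eexists; exists nnsfun0; last reflexivity; move=> x /=; exact: f0.
- by eexists; exists nnsfun0; last reflexivity; move=> x /=; exact: g0.
move=> _ _ [h1 /= h1f <-] [h2 /= h2g <-].
apply: ereal_sup_ubound; exists (add_nnsfun h1 h2).
  by move=> x /=; rewrite EFinD leeD.
by rewrite -sintegralD.
Qed.

End IntLemmas.
Section LintLemmas.
Context {R : realType}.
Local Open Scope ereal_scope.
Local Notation mu := (@lebesgue_measure R).

Lemma lint_ge0 n (F : 'rV[R]_n -> \bar R) : (forall x, 0 <= F x) -> 0 <= lint F.
Proof.
elim: n F => [|n IH] F F0 /=; first exact: F0.
by apply: integral_ge0 => t _; apply: IH => y; exact: F0.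
Qed.

Lemma lint_le n (F G : 'rV[R]_n -> \bar R) : (forall x, 0 <= F x) ->
  (forall x, F x <= G x) -> lint F <= lint G.
Proof.
elim: n F G => [|n IH] F G F0 FG /=; first exact: FG.
apply: int_le => t; first by apply: lint_ge0 => y; exact: F0.
by apply: IH => y; [exact: F0 | exact: FG].
Qed.

Lemma lint0 n : lint (fun _ : 'rV[R]_n => 0) = 0.
Proof.
elim: n => [|n IH] //=.
rewrite (_ : (fun t : R => _) = (fun _ => 0)); first exact: integral0.
by apply/funext => t; rewrite IH.
Qed.

Lemma lint_scale n (k : R) (F : 'rV[R]_n -> \bar R) : (0 <= k)%R ->
  (forall x, 0 <= F x) -> lint (fun x => k%:E * F x) = k%:E * lint F.
Proof.
move=> k0 F0; have [->|kgt0] := eqVneq k 0%R.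
  by rewrite mul0e; under eq_fun do rewrite mul0e; exact: lint0.
have {k0 kgt0}k0 : (0 < k)%R by rewrite lt0r kgt0.
elim: n F F0 => [|n IH] F F0 //=.
rewrite (_ : (fun t : R => _) = (fun t => k%:E * lint (fun y : 'rV[R]_n => F (row_mx (const_mx t : 'rV[R]_1) y)))).
  by apply: int_scale => // t; apply: lint_ge0 => y; exact: F0.
by apply/funext => t; rewrite IH // => y; exact: F0.
Qed.

Lemma lint_superadd n (F G : 'rV[R]_n -> \bar R) : (forall x, 0 <= F x) ->
  (forall x, 0 <= G x) -> lint F + lint G <= lint (fun x => F x + G x).
Proof.
elim: n F G => [|n IH] F G F0 G0 //=.
apply: le_trans; first apply: int_superadd.
- by move=> t; apply: lint_ge0 => y; exact: F0.
- by move=> t; apply: lint_ge0 => y; exact: G0.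
apply: int_le.
- by move=> t; rewrite adde_ge0 //; apply: lint_ge0 => y; [exact: F0|exact: G0].
by move=> t; apply: IH => y; [exact: F0|exact: G0].
Qed.

Lemma row_mx_ord0 n (t : R) (y : 'rV[R]_n) :
  (row_mx (const_mx t : 'rV[R]_1) y) 0%R ord0 = t.
Proof.
by rewrite (_ : ord0 = lshift n (ord0 : 'I_1)) ?row_mxEl ?mxE //; apply/val_inj.
Qed.

Lemma row_mx_lift n (t : R) (y : 'rV[R]_n) (i : 'I_n) :
  (row_mx (const_mx t : 'rV[R]_1) y) 0%R (lift ord0 i) = y 0%R i.
Proof.
by rewrite (_ : lift ord0 i = rshift 1 i) ?row_mxEr //; apply/val_inj.
Qed.

Lemma lint_prod n (f : R -> R) (I : R) : measurable_fun setT f ->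
  (forall s, (0 <= f s)%R) -> \int[mu]_s (f s)%:E = I%:E ->
  lint (fun x : 'rV[R]_n => (\prod_(i < n) f (x 0%R i))%:E) = (I ^+ n)%:E.
Proof.
move=> mf f0 If.
have I0 : (0 <= I)%R.
  by rewrite -lee_fin -If; apply: integral_ge0 => s _; rewrite lee_fin.
elim: n => [|n IH] /=; first by rewrite big_ord0.
rewrite (_ : (fun t : R => _) = (fun t => (f t)%:E * (I ^+ n)%:E)).
  rewrite ge0_integralZr //.
  - by rewrite If -EFinM -exprS.
  - by apply/measurable_realfun.measurable_EFinP.
  - by move=> s _; rewrite lee_fin.
  - by rewrite lee_fin exprn_ge0.
apply/funext => t.
rewrite (_ : (fun y : 'rV[R]_n => _) =
  (fun y : 'rV[R]_n => (f t)%:E * (\prod_(i < n) f (y 0%R i))%:E)); last first.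
  apply/funext => y; rewrite big_ord_recl row_mx_ord0 EFinM.
  by congr (_ * (_)%:E); apply: eq_bigr => i _; rewrite row_mx_lift.
rewrite lint_scale ?IH // => y.
by rewrite lee_fin; apply: prodr_ge0 => i _.
Qed.

End LintLemmas.
Section Pointwise.
Context {R : realType}.

Definition Qf n (phi : 'M[R]_n) (x : 'rV[R]_n) : R := inner (x *m phi^T) (x *m phi^T).

Lemma inner_ge0 n (x : 'rV[R]_n) : 0 <= inner x x.
Proof. by apply: sumr_ge0 => i _; rewrite -expr2 sqr_ge0. Qed.

Lemma innerZl n a (x y : 'rV[R]_n) : inner (a *: x) y = a * inner x y.
Proof. by rewrite /inner mulr_sumr; apply: eq_bigr => i _; rewrite mxE mulrA. Qed.

Lemma innerZr n a (x y : 'rV[R]_n) : inner x (a *: y) = a * inner x y.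
Proof. by rewrite /inner mulr_sumr; apply: eq_bigr => i _; rewrite mxE mulrCA. Qed.

Lemma inner0l n (y : 'rV[R]_n) : inner 0 y = 0.
Proof. by rewrite /inner big1 // => i _; rewrite mxE mul0r. Qed.

Lemma Qf_ge0 n (phi : 'M[R]_n) x : 0 <= Qf phi x.
Proof. exact: inner_ge0. Qed.

Lemma ugaussE n (phi : 'M[R]_n) x : ugauss phi x = (Qf phi x / 2)%:E.
Proof. by rewrite /ugauss /enorm sqr_sqrtr // inner_ge0. Qed.

Lemma gaussE n (phi : 'M[R]_n) x : gauss phi x = expR (- (Qf phi x / 2)).
Proof. by rewrite /gauss /expm ugaussE. Qed.

Lemma Qf_scalex n (phi : 'M[R]_n) a x : Qf phi (a *: x) = a ^+ 2 * Qf phi x.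
Proof. by rewrite /Qf -scalemxAl innerZl innerZr mulrA -expr2. Qed.

Lemma Qf_scalephi n (phi : 'M[R]_n) a x : Qf (a *: phi) x = a ^+ 2 * Qf phi x.
Proof.
rewrite /Qf (_ : (a *: phi)^T = a *: phi^T); last by apply/matrixP => i j; rewrite !mxE.
by rewrite -scalemxAr innerZl innerZr mulrA -expr2.
Qed.

Lemma Qf0 n (phi : 'M[R]_n) : Qf phi 0 = 0.
Proof. by rewrite /Qf mul0mx inner0l. Qed.

Lemma hgauss_ge0 n (phi : 'M[R]_n) y : (0 <= hgauss phi y)%E.
Proof.
apply: ereal_sup_ubound; exists 0 => //.
by rewrite ugaussE Qf0 inner0l mul0r subee.
Qed.

Lemma hgauss_scale n (phi : 'M[R]_n) (t : R) y : 0 < t ->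
  hgauss (t *: phi) y = (((t ^+ 2)^-1)%:E * hgauss phi y)%E.
Proof.
move=> t0; have t2 : t ^+ 2 != 0 by rewrite expf_neq0 // gt_eqF.
rewrite /hgauss /legendre -ereal_sup_pZl ?invr_gt0 ?exprn_gt0 //.
congr ereal_sup; apply/seteqP; split.
- move=> _ [x _ <-].
  exists ((inner (t ^+ 2 *: x) y)%:E - ugauss phi (t ^+ 2 *: x))%E; first by exists (t ^+ 2 *: x).
  rewrite !ugaussE innerZl Qf_scalex Qf_scalephi -EFinB -EFinM; congr EFin.
  by field; rewrite gt_eqF.
- move=> _ [_ [z _ <-] <-].
  exists ((t ^+ 2)^-1 *: z) => //.
  rewrite !ugaussE innerZl Qf_scalex Qf_scalephi -EFinB -EFinM; congr EFin.
  by field; rewrite gt_eqF.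
Qed.

Lemma epow_ge0 (a : \bar R) s : (0 <= epow a s)%E.
Proof.
case: a => [r| |] /=.
- case: ifP => _; first by case: (s < 0)%R => //; case: (s == 0).
  by rewrite lee_fin; exact: powR_ge0.
- by case: (s < 0)%R => //; case: (s == 0).
- by [].
Qed.

Lemma expm_ge0 n (u : 'rV[R]_n -> \bar R) x : 0 <= expm u x.
Proof. by rewrite /expm; case: (u x) => //= r; exact: expR_ge0. Qed.

Lemma epow_scale (k p : R) (a : \bar R) : 0 < k -> 0 < p -> (0 <= a)%E ->
  epow (k%:E * a) p = ((powR k p)%:E * epow a p)%E.
Proof.
move=> k0 p0; case: a => [r| |] //= r0.
- rewrite mulf_eq0 (gt_eqF k0) /= ltNge (ltW p0) /= (gt_eqF p0).
  case: ifP => _; first by rewrite mule0.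
  by rewrite powRM // ?ltW // -lee_fin.
- rewrite gt0_muley ?lte_fin // /= ltNge (ltW p0) /= (gt_eqF p0).
  by rewrite gt0_muley // lte_fin powR_gt0.
Qed.

End Pointwise.
Section MxBounds.
Context {R : realType}.

Lemma le_term_sum (I : finType) (F : I -> R) i : (forall j, 0 <= F j) -> F i <= \sum_j F j.
Proof. by move=> F0; rewrite (bigD1 i) //= lerDl sumr_ge0. Qed.

Lemma mx_bound n (A : 'M[R]_n) (x : 'rV[R]_n) :
  inner (x *m A) (x *m A) <= n%:R * (\sum_i \sum_j `|A i j|) ^+ 2 * inner x x.
Proof.
set P := \sum_i \sum_j `|A i j|.
set s := Num.sqrt (inner x x).
have s0 : 0 <= s by exact: sqrtr_ge0.
have P0 : 0 <= P by apply: sumr_ge0 => i _; apply: sumr_ge0.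
have hx i : `|x 0 i| <= s.
  rewrite -sqrtr_sqr ler_sqrt ?inner_ge0 // expr2.
  by apply: (le_term_sum (F := fun j => x 0 j * x 0 j)) => j; rewrite -expr2 sqr_ge0.
have hy j : `|(x *m A) 0 j| <= s * P.
  rewrite mxE; apply: le_trans (ler_norm_sum _ _ _) _.
  apply: (@le_trans _ _ (\sum_i s * `|A i j|)).
    by apply: ler_sum => i _; rewrite normrM ler_wpM2r.
  rewrite -mulr_sumr ler_wpM2l //.
  apply: ler_sum => i _.
  by apply: (le_term_sum (F := fun j' => `|A i j'|)).
rewrite /inner.
apply: (@le_trans _ _ (\sum_(j < n) (s * P) ^+ 2)).
  apply: ler_sum => j _; set a := (x *m A) 0 j.
  rewrite -[a * a]ger0_norm; last by rewrite -expr2 sqr_ge0.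
  by rewrite normrM expr2 ler_pM ?hy.
rewrite sumr_const card_ord -mulr_natl exprMn sqr_sqrtr ?inner_ge0 //.
rewrite le_eqVlt; apply/orP; left; apply/eqP.
by rewrite -mulr_natr /inner mulr1; ring.
Qed.

Lemma Qf_upper n (phi : 'M[R]_n) x :
  Qf phi x <= n%:R * (\sum_i \sum_j `|phi^T i j|) ^+ 2 * inner x x.
Proof. exact: mx_bound. Qed.

Lemma Qf_lower n (phi : 'M[R]_n) : phi \in unitmx ->
  exists lam, 0 < lam /\ forall x, lam * inner x x <= Qf phi x.
Proof.
move=> phiU; have phiTU : phi^T \in unitmx by rewrite unitmx_tr.
set K := n%:R * (\sum_i \sum_j `|(invmx phi^T) i j|) ^+ 2.
have K0 : 0 <= K by rewrite mulr_ge0 // sqr_ge0.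
exists (K + 1)^-1; split; first by rewrite invr_gt0 ltr_wpDl.
move=> x.
have h1 : inner x x <= K * Qf phi x.
  have := mx_bound (invmx phi^T) (x *m phi^T).
  by rewrite mulmxK.
have h2 : inner x x <= (K + 1) * Qf phi x.
  by rewrite mulrDl mul1r; apply: le_trans h1 _; rewrite lerDl Qf_ge0.
rewrite -[leRHS](mulKf (x := K + 1)) ?gt_eqF ?ltr_wpDl //.
by rewrite ler_wpM2l // invr_ge0 addr_ge0.
Qed.

End MxBounds.
Section JLemmas.
Context {R : realType}.
Local Notation mu := (@lebesgue_measure R).

Lemma JfE n (f : 'rV[R]_n -> R) : (forall x, 0 <= f x) ->
  Jf f = lint (fun x => (f x)%:E).
Proof.
move=> f0; rewrite /Jf /rint.
rewrite (_ : (fun x => _) = (fun x => (f x)%:E)); last first.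
  by apply/funext => x; rewrite max_l.
rewrite (_ : (fun x => (Num.max (- f x) 0)%:E) = (fun _ => 0%E)); last first.
  by apply/funext => x; rewrite max_r // oppr_le0.
by rewrite lint0 sube0.
Qed.

Lemma gauss_ge0 n (phi : 'M[R]_n) x : 0 <= gauss phi x.
Proof. by rewrite gaussE expR_ge0. Qed.

Lemma J_finite n (phi : 'M[R]_n) : phi \in unitmx ->
  (lint (fun x => (gauss phi x)%:E) < +oo)%E.
Proof.
move=> phiU; have [lam [lam0 hlam]] := Qf_lower phiU.
set sg := Num.sqrt lam^-1.
have sg2 : sg ^+ 2 = lam^-1 by rewrite sqr_sqrtr // invr_ge0 ltW.
have sg0 : sg != 0 by rewrite sqrtr_eq0 -ltNge invr_gt0.
set pk := normal_peak sg.
have pk0 : 0 < pk by exact: normal_peak_gt0.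
apply: (@le_lt_trans _ _ (lint (fun x : 'rV[R]_n =>
   (((pk ^+ n)^-1)%:E * (\prod_(i < n) normal_pdf 0 sg (x 0%R i))%:E)%E))).
  apply: lint_le => [x|x]; first by rewrite lee_fin gauss_ge0.
  rewrite -EFinM lee_fin normal_pdfE // gaussE.
  rewrite big_split /= prodr_const card_ord mulrA mulVf ?expf_neq0 ?gt_eqF // mul1r.
  rewrite /normal_fun -expR_sum ler_expR.
  rewrite (_ : \sum_(i < n) _ = - (lam * inner x x / 2)).
    by rewrite lerN2 ler_pM2r // (hlam x).
  rewrite /inner mulr_sumr mulr_suml -sumrN; apply: eq_bigr => i _.
  by rewrite sg2 subr0 -mulr_natr; field; rewrite gt_eqF.
rewrite (lint_scale (F := fun x : 'rV[R]_n => (\prod_(i < n) normal_pdf 0 sg (x 0%R i))%:E)) //.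
- rewrite (@lint_prod R n _ 1) ?expr1n ?mulr1 ?ltry //.
  + exact: measurable_normal_pdf.
  + by move=> s; exact: normal_pdf_ge0.
  + exact: integral_normal_pdf.
- by rewrite invr_ge0 exprn_ge0 // ltW.
- by move=> x; rewrite lee_fin prodr_ge0 // => i _; exact: normal_pdf_ge0.
Qed.

End JLemmas.
Section JStrict.
Context {R : realType}.
Local Notation mu := (@lebesgue_measure R).

Lemma J_strict n (phi : 'M[R]_n) (t : R) : (0 < n)%N -> phi \in unitmx -> 0 < t -> t < 1 ->
  exists c : R, 0 < c /\ (lint (fun x => (gauss phi x)%:E) + c%:E <=
     lint (fun x => (gauss (t *: phi) x)%:E))%E.
Proof.
move=> n0 phiU t0 t1; have [lam [lam0 hlam]] := Qf_lower phiU.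
set Lam := n%:R * (\sum_i \sum_j `|phi^T i j|) ^+ 2.
have Lam0 : 0 <= Lam by rewrite mulr_ge0 // sqr_ge0.
set qM := Lam * (4 * n%:R).
set c := expR (- (t ^+ 2 * qM / 2)) * (1 - expR (- ((1 - t ^+ 2) * lam / 2))).
have tt1 : t ^+ 2 < 1 by rewrite expr2; nra.
have tt0 : 0 <= t ^+ 2 by rewrite sqr_ge0.
have c0 : 0 < c.
  rewrite mulr_gt0 ?expR_gt0 // subr_gt0 expR_lt1 oppr_lt0.
  by rewrite divr_gt0 // mulr_gt0 // subr_gt0.
exists c; split => //.
set box := fun x : 'rV[R]_n => \prod_(i < n) (\1_(`[1, 2]%classic : set R) (x 0%R i) : R).
have box0 : forall x, 0 <= box x.
  by move=> x; apply: prodr_ge0 => i _; rewrite indicE.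
have pw : forall x, ((gauss phi x)%:E + (c * box x)%:E <= (gauss (t *: phi) x)%:E)%E.
  move=> x; rewrite -EFinD lee_fin !gaussE Qf_scalephi.
  set q := Qf phi x.
  have q0 : 0 <= q by exact: Qf_ge0.
  have Eq : expR (- (q / 2)) = expR (- (t ^+ 2 * q / 2)) * expR (- ((1 - t ^+ 2) * q / 2)).
    by rewrite -expRD; congr expR; field.
  case: (pselect (forall i : 'I_n, (`[1, 2]%classic : set R) (x 0%R i))) => [inb|notin].
  - have -> : box x = 1.
      by rewrite /box big1 // => i _; rewrite indicE mem_set.
    have hin i : 1 <= x 0%R i <= 2.
      by have := inb i; rewrite /= in_itv.
    have inner1 : 1 <= inner x x.
      apply: le_trans (le_term_sum (F := fun j => x 0%R j * x 0%R j) (Ordinal n0) _).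
        by have /andP[h1 h2] := hin (Ordinal n0); rewrite /=; nra.
      by move=> j; rewrite -expr2 sqr_ge0.
    have inner4 : inner x x <= 4 * n%:R.
      rewrite /inner (@le_trans _ _ (\sum_(j < n) (4 : R))) //.
        by apply: ler_sum => j _; have /andP[h1 h2] := hin j; nra.
      by rewrite sumr_const card_ord mulr_natr.
    have qlo : lam <= q.
      by apply: le_trans (hlam x); rewrite ler_peMr // ltW.
    have qhi : q <= qM.
      by apply: le_trans (Qf_upper phi x) _; rewrite ler_wpM2l.
    rewrite Eq mulr1.
    set E1 := expR (- (t ^+ 2 * q / 2)); set E2 := expR (- ((1 - t ^+ 2) * q / 2)).
    have hc : c <= E1 * (1 - E2).
      have tq0 : 0 <= 1 - t ^+ 2 by lra.
      apply: ler_pM.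
      - exact: expR_ge0.
      - have : expR (- ((1 - t ^+ 2) * lam / 2)) <= 1.
          by rewrite expR_le1 oppr_le0 divr_ge0 // mulr_ge0 // ltW.
        lra.
      - by rewrite ler_expR lerN2 ler_pM2r // ler_wpM2l.
      - have : E2 <= expR (- ((1 - t ^+ 2) * lam / 2)).
          by rewrite ler_expR lerN2 ler_pM2r // ler_wpM2l.
        lra.
    by move: hc; rewrite mulrBr mulr1 => hc; lra.
  - have -> : box x = 0.
      have [i /= ni] := (existsNP _).2 notin.
      by rewrite /box (bigD1 i) //= indicE memNset // mul0r.
    rewrite mulr0 addr0 ler_expR lerN2 ler_pM2r //.
    by rewrite ler_piMl // ltW.
have Ibox : lint (fun x => (box x)%:E) = 1%E.
  have mI : measurable_fun setT (\1_(`[1, 2]%classic : set R) : R -> R).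
    by apply: measurable_realfun.measurable_indic; exact: measurable_itv.
  have I0 : forall s, 0 <= (\1_(`[1, 2]%classic : set R) s : R).
    by move=> s; rewrite indicE.
  have II : (\int[mu]_s (\1_(`[1, 2]%classic : set R) s : R)%:E = 1%:E)%E.
    rewrite integral_indic // setIT.
    have := @lebesgue_measure_itv R `[1, 2]; rewrite /= lte_fin ltr1n => ->.
    by rewrite -EFinB; congr EFin; lra.
  by rewrite /box (@lint_prod R n _ 1 mI I0 II) expr1n.
apply: le_trans (lint_le _ pw); last first.
  by move=> x; rewrite -EFinD lee_fin addr_ge0 ?gauss_ge0 // mulr_ge0 // ltW.
apply: le_trans (lint_superadd _ _); last first.
- by move=> x; rewrite lee_fin mulr_ge0 // ltW.
- by move=> x; rewrite lee_fin gauss_ge0.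
rewrite (_ : (fun x => (c * box x)%:E) = (fun x => c%:E * (box x)%:E)%E); last first.
  by apply/funext => x; rewrite EFinM.
by rewrite (lint_scale (F := fun x => (box x)%:E)) ?Ibox ?mule1 // ltW.
Qed.

End JStrict.
Section Main.
Context {R : realType}.

Lemma deltaJ_scale n (p : R) (u : 'rV[R]_n -> \bar R) (phi : 'M[R]_n) (t : R) :
  0 < t -> 0 < p ->
  deltaJ p u (hgauss (t *: phi)) = ((powR ((t ^+ 2)^-1) p)%:E * deltaJ p u (hgauss phi))%E.
Proof.
move=> t0 p0; rewrite /deltaJ.
set k := powR ((t ^+ 2)^-1) p.
have k0 : 0 < k by rewrite powR_gt0 // invr_gt0 exprn_gt0.
set F := fun x : 'rV[R]_n => if `[< graddom u x >] then
   (epow (hgauss phi (grad u x)) p * epow (legendre u (grad u x)) (1 - p) * (expm u x)%:E)%E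
   else 0%E.
have F0 : forall x, (0 <= F x)%E.
  move=> x; rewrite /F; case: ifP => // _.
  by rewrite !mule_ge0 ?epow_ge0 // lee_fin expm_ge0.
rewrite (_ : (fun x => _) = (fun x => k%:E * F x)%E); last first.
  apply/funext => x; rewrite /F; case: ifP => _; last by rewrite mule0.
  rewrite hgauss_scale // epow_scale ?hgauss_ge0 ?invr_gt0 ?exprn_gt0 //.
  by rewrite !muleA.
by rewrite lint_scale ?(ltW k0) // muleCA.
Qed.

Lemma exists_t n (p : R) (u : 'rV[R]_n -> \bar R) (phi0 : 'M[R]_n) :
  0 < p -> (odeltaJ p u (hgauss phi0) < 1)%E ->
  exists t : R, [/\ 0 < t, t < 1 & (odeltaJ p u (hgauss (t *: phi0)) <= 1)%E].
Proof.
move=> p0 lt1.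
have pi0 : p^-1 != 0 by rewrite invr_eq0 gt_eqF.
set K := (fine (Jdiamond (expm u)))^-1.
set D := (p%:E * deltaJ p u (hgauss phi0) * K%:E)%E.
have odE : forall t, 0 < t -> odeltaJ p u (hgauss (t *: phi0)) =
    poweR ((powR ((t ^+ 2)^-1) p)%:E * D)%E p^-1.
  move=> t t0; rewrite /odeltaJ deltaJ_scale //; congr poweR.
  by rewrite muleCA -muleA.
have od0 : odeltaJ p u (hgauss phi0) = poweR D p^-1 by [].
have half : 0 < 2^-1 :> R by rewrite invr_gt0.
have half1 : 2^-1 < 1 :> R by rewrite invf_lt1 // ltr1n.
move: lt1 odE; rewrite od0; clear od0; clearbody D; case: D => [r| |] /=.
- rewrite lte_fin => lt1 odE.
  have [rlt0|rgt0|r0] := ltgtP r 0.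
  + move: lt1; rewrite /powR lt_eqF // ln0 ?ltW // mulr0 expR0 ltxx //.
  + set s := powR r p^-1.
    have s0 : 0 < s by rewrite powR_gt0.
    exists (Num.sqrt s); split.
    * by rewrite sqrtr_gt0.
    * by rewrite -sqrtr1 ltr_sqrt.
    rewrite odE ?sqrtr_gt0 // (sqr_sqrtr (ltW s0)) lee_fin.
    rewrite /s -powRN -powRrM mulNr mulVf ?gt_eqF // powRN (powRr1 (ltW rgt0)).
    by rewrite mulVf ?gt_eqF // powR1.
  + exists 2^-1; split => //; by rewrite odE // r0 mulr0 lee_fin powR0.
- case: eqP => [h|_]; first by move: pi0; rewrite h eqxx.
  by rewrite ltNge leey.
- move=> _ odE; exists 2^-1; split => //.
  rewrite odE // gt0_muleNy /=; last by rewrite lte_fin powR_gt0 // invr_gt0 exprn_gt0.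
  by case: eqP.
Qed.

End Main.

Unset Implicit Arguments.

Theorem corollary3p4 (R : realType) (n : nat) (p : R) (u : 'rV[R]_n -> \bar R)
    (phi0 : 'M[R]_n) :
  (0 < n)%N -> 1 <= p -> classA0 u -> solves_Sp p u phi0 ->
  odeltaJ p u (hgauss phi0) = 1%E.
Proof.
move=> n0 p1 _ [U [feas maxi]].
have p0 : 0 < p by apply: lt_le_trans p1.
apply/eqP; rewrite eq_le feas /= leNgt; apply/negP => lt1.
have [t [t0 t1 feast]] := exists_t p0 lt1.
have Ut : t *: phi0 \in unitmx by rewrite unitmxZ // unitfE gt_eqF.
have := maxi _ Ut feast.
have cn0 : 0 < (c_n R n)^-1 :> R by rewrite invr_gt0 /c_n powR_gt0 // mulr_gt0 // pi_gt0.
rewrite lee_pmul2r ?lte_fin //.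
rewrite !JfE; try by move=> x; exact: gauss_ge0.
have [c [c0 hc]] := J_strict n0 U t0 t1.
have fin := J_finite U.
have ge0 : (0 <= lint (fun x => (gauss phi0 x)%:E))%E.
  by apply: lint_ge0 => x; rewrite lee_fin gauss_ge0.
move=> hle; have := le_trans hc hle.
move: fin ge0; case: (lint (fun x => (gauss phi0 x)%:E)) => [r| |] //= _ _.
by rewrite -EFinD lee_fin -lerBrDl subrr leNgt c0.
Qed.
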